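(* $\mathrm{Isom}_{\mathbb Z}(L)$ is equal to each of the groups $\langle (x\,y),-1\rangle\ltimes G$, $\langle (y\,z),-1\rangle\ltimes G$, $\langle (z\,x),-1\rangle\ltimes G$ (semidirect products with $G$ normal). In particular $\mathrm{Isom}_{\mathbb Z}(L)\cong(\mathbb Z_2\times\mathbb Z_2)\ltimes G$.
   Context: $\mathbb F$ is a field of characteristic zero, $\mathfrak{sl}_2$ the Lie algebra of $2\times2$ trace-zero matrices over $\mathbb F$ with trace form $(u,v)=\mathrm{tr}(uv)$. Equitable basis: $x=\begin{pmatrix}1&0\\0&-1\end{pmatrix}$, $y=\begin{pmatrix}-1&2\\0&1\end{pmatrix}$, $z=\begin{pmatrix}-1&0\\-2&1\end{pmatrix}$. Let $x^*=\begin{pmatrix}1&-1\\1&-1\end{pmatrix}$, $y^*=\begin{pmatrix}0&0\\1&0\end{pmatrix}$, $z^*=\begin{pmatrix}0&-1\\0&0\end{pmatrix}$; $G$ is the subgroup of $\mathrm{Aut}_{\mathbb F}(\mathfrak{sl}_2)$ generated by $\exp(\mathrm{ad}\,x^* ),\exp(\mathrm{ad}\,y^* ),\exp(\mathrm{ad}\,z^* )$. $L=\mathbb Zx\oplus\mathbb Zy\oplus\mathbb Zz$. An isometry is an $\mathbb F$-linear bijection of $\mathfrak{sl}_2$ preserving the trace form; $\mathrm{Isom}_{\mathbb Z}(L)$ is the group of isometries $\varphi$ with $\varphi(L)=L$. For distinct $u,v\in\{x,y,z\}$, $(u\,v)$ is the $\mathbb F$-linear map interchanging $u,v$ and fixing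 the third basis element; $-1$ is $u\mapsto -u$. *)

(* Defs.v *)
From HB Require Import structures.
From mathcomp Require Import all_boot all_order all_algebra.
Set Implicit Arguments. Unset Strict Implicit. Unset Printing Implicit Defensive.
Import Order.TTheory GRing.Theory.
Local Open Scope ring_scope.

Section Sl2.
Variable F : fieldType.

Definition mx2 (a b c d : F) : 'M[F]_2 :=
  \matrix_(i < 2, j < 2)
    if (i == 0 :> nat) then (if (j == 0 :> nat) then a else b)
    else (if (j == 0 :> nat) then c else d).

Definition ex : 'M[F]_2 := mx2 1 0 0 (-1).
Definition ey : 'M[F]_2 := mx2 (-1) 2 0 1.
Definition ez : 'M[F]_2 := mx2 (-1) 0 (-2) 1.
Definition xs : 'M[F]_2 := mx2 1 (-1) 1 (-1).
Definition ys : 'M[F]_2 := mx2 0 0 1 0.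
Definition zs : 'M[F]_2 := mx2 0 (-1) 0 0.

Definition i0 : 'I_3 := inord 0.
Definition i1 : 'I_3 := inord 1.
Definition i2 : 'I_3 := inord 2.

(* sl2 is identified with F^3 (row vectors) through the basis x, y, z:
   emb v = v_0 x + v_1 y + v_2 z. *)
Definition emb (v : 'rV[F]_3) : 'M[F]_2 :=
  v 0 i0 *: ex + v 0 i1 *: ey + v 0 i2 *: ez.

(* coordinates of a trace-zero matrix [[a,b],[c,-a]] in the basis x, y, z
   (inverse of emb on sl2; uses char F <> 2) *)
Definition coord (m : 'M[F]_2) : 'rV[F]_3 :=
  let a := m 0 0 in let b := m 0 1 in let c := m 1 0 in
  \row_(j < 3) (if j == i0 then a + b / 2 - c / 2
                else if j == i1 then b / 2 else - (c / 2)).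

Definition ad (a u : 'M[F]_2) : 'M[F]_2 := a *m u - u *m a.

(* For a nilpotent, ad a is a
   nilpotent operator on a 4-dim space, so (ad a)^4 = 0 and the series is
   exactly the finite sum below. *)
Definition exp_ad (a u : 'M[F]_2) : 'M[F]_2 :=
  \sum_(k < 4) (k`!%:R)^-1 *: iter k (ad a) u.

(* A linear map of sl2 is represented by its 3x3 matrix A in the basis x,y,z,
   acting on coordinate rows: v |-> v *m A; composition is matrix product. *)
Definition exp_ad_mx (a : 'M[F]_2) : 'M[F]_3 :=
  lin1_mx (fun v => coord (exp_ad a (emb v))).

Definition tform (u v : 'rV[F]_3) : F := \tr (emb u *m emb v).

Definition inL (v : 'rV[F]_3) : Prop := forall j, exists n : int, v 0 j = n%:~R.

Definition IsomZ (A : 'M[F]_3) : Prop :=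
  [/\ A \in unitmx,
      (forall u v, tform (u *m A) (v *m A) = tform u v),
      (forall v, inL v -> inL (v *m A)) &
      (forall w, inL w -> exists2 v, inL v & v *m A = w)].

Inductive gen (S : 'M[F]_3 -> Prop) : 'M[F]_3 -> Prop :=
  | gen1 : gen S 1%:M
  | genM s g : S s -> gen S g -> gen S (s *m g)
  | genV s g : S s -> gen S g -> gen S (invmx s *m g).

Definition Ggrp : 'M[F]_3 -> Prop :=
  gen (fun s => s = exp_ad_mx xs \/ s = exp_ad_mx ys \/ s = exp_ad_mx zs).

Definition swap (i j : 'I_3) : 'M[F]_3 := tperm_mx i j.
Definition minus1 : 'M[F]_3 := - 1%:M.

Definition Hgrp (i j : 'I_3) : 'M[F]_3 -> Prop :=
  gen (fun s => s = swap i j \/ s = minus1).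

Definition semidirect_eq (K H N : 'M[F]_3 -> Prop) : Prop :=
  [/\ (forall a, K a <-> exists h n, [/\ H h, N n & a = h *m n]),
      (forall a, H a -> K a),
      (forall a, N a -> K a),
      (forall k n, K k -> N n -> N (invmx k *m n *m k)) &
      (forall a, H a -> N a -> a = 1%:M)].

Definition klein_four (H : 'M[F]_3 -> Prop) : Prop :=
  exists a b : 'M[F]_3,
    [/\ (forall c, H c <-> [\/ c = 1%:M, c = a, c = b | c = a *m b]),
        a *m a = 1%:M, b *m b = 1%:M, a *m b = b *m a &
        uniq [:: 1%:M; a; b; a *m b]].

End Sl2.

(* Main.v *)
Require Import Defs.
From HB Require Import structures.
From mathcomp Require Import all_boot all_order all_algebra perm.
From Stdlib Require Import ZArith Lia Psatz List Ring Field.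

Module ZM.
Local Open Scope Z_scope.


Record m3 := M3 { e00 : Z; e01 : Z; e02 : Z; e10 : Z; e11 : Z; e12 : Z; e20 : Z; e21 : Z; e22 : Z }.
Record v3 := V3 { c0 : Z; c1 : Z; c2 : Z }.

Definition mm (a b : m3) : m3 :=
  M3 (e00 a * e00 b + e01 a * e10 b + e02 a * e20 b)
     (e00 a * e01 b + e01 a * e11 b + e02 a * e21 b)
     (e00 a * e02 b + e01 a * e12 b + e02 a * e22 b)
     (e10 a * e00 b + e11 a * e10 b + e12 a * e20 b)
     (e10 a * e01 b + e11 a * e11 b + e12 a * e21 b)
     (e10 a * e02 b + e11 a * e12 b + e12 a * e22 b)
     (e20 a * e00 b + e21 a * e10 b + e22 a * e20 b)
     (e20 a * e01 b + e21 a * e11 b + e22 a * e21 b)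
     (e20 a * e02 b + e21 a * e12 b + e22 a * e22 b).
Definition vm (v : v3) (a : m3) : v3 :=
  V3 (c0 v * e00 a + c1 v * e10 a + c2 v * e20 a)
     (c0 v * e01 a + c1 v * e11 a + c2 v * e21 a)
     (c0 v * e02 a + c1 v * e12 a + c2 v * e22 a).
Definition trZ (a : m3) : m3 :=
  M3 (e00 a) (e10 a) (e20 a) (e01 a) (e11 a) (e21 a) (e02 a) (e12 a) (e22 a).
Definition detZ (a : m3) : Z :=
  e00 a * (e11 a * e22 a - e12 a * e21 a) - e01 a * (e10 a * e22 a - e12 a * e20 a)
  + e02 a * (e10 a * e21 a - e11 a * e20 a).

Definition IZ := M3 1 0 0 0 1 0 0 0 1.
Definition NZ := M3 (-1) 0 0 0 (-1) 0 0 0 (-1).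
Definition G0 := M3 2 (-2) (-2) (-2) 2 (-2) (-2) (-2) 2.
Definition GX := M3 1 2 0 0 2 1 0 (-1) 0.
Definition GY := M3 0 0 (-1) 0 1 2 1 0 2.
Definition GZ := M3 2 1 0 (-1) 0 0 2 0 1.
Definition GXi := M3 1 0 2 0 0 (-1) 0 1 2.
Definition GYi := M3 2 0 1 2 1 0 (-1) 0 0.
Definition GZi := M3 0 (-1) 0 1 2 0 0 2 1.
Definition S01 := M3 0 1 0 1 0 0 0 0 1.
Definition S12 := M3 1 0 0 0 0 1 0 1 0.
Definition S20 := M3 0 0 1 0 1 0 1 0 0.
Definition C1 := M3 0 1 0 0 0 1 1 0 0.
Definition C2 := M3 0 0 1 1 0 0 0 1 0.
Definition wv := V3 1 1 1.

Definition isoZ (m : m3) : Prop := mm (mm m G0) (trZ m) = G0.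
Definition qv (v : v3) : Z :=
  2 * (c0 v * c0 v + c1 v * c1 v + c2 v * c2 v)
  - 4 * (c0 v * c1 v + c1 v * c2 v + c2 v * c0 v).

Definition gens (s : m3) : Prop :=
  s = GX \/ s = GY \/ s = GZ \/ s = GXi \/ s = GYi \/ s = GZi.
Inductive genZ : m3 -> Prop :=
  | gz1 : genZ IZ
  | gzM s g : gens s -> genZ g -> genZ (mm s g).

Ltac m3eq := repeat match goal with a : m3 |- _ => destruct a end;
  unfold mm, trZ, vm, IZ, NZ; cbn [e00 e01 e02 e10 e11 e12 e20 e21 e22 c0 c1 c2]; f_equal; ring.

Lemma mmA a b c : mm a (mm b c) = mm (mm a b) c. Proof. m3eq. Qed.
Lemma mm1l a : mm IZ a = a. Proof. m3eq. Qed.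
Lemma mm1r a : mm a IZ = a. Proof. m3eq. Qed.
Lemma vmA v a b : vm v (mm a b) = vm (vm v a) b.
Proof. destruct v; m3eq. Qed.
Lemma trM a b : trZ (mm a b) = mm (trZ b) (trZ a). Proof. m3eq. Qed.
Lemma detM a b : detZ (mm a b) = detZ a * detZ b.
Proof. destruct a, b; unfold detZ, mm; simpl; ring. Qed.
Lemma mmN a : mm NZ (mm a NZ) = a. Proof. m3eq. Qed.
Lemma NZcomm a : mm NZ a = mm a NZ. Proof. m3eq. Qed.

Lemma isoM a b : isoZ a -> isoZ b -> isoZ (mm a b).
Proof.
  unfold isoZ; intros Ha Hb.
  rewrite trM !mmA -(mmA a b G0) -(mmA a (mm b G0) (trZ b)) Hb. exact Ha.
Qed.

Lemma gens_iso s : gens s -> isoZ s.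
Proof. unfold gens, isoZ; intros [->|[->|[->|[->|[->| ->]]]]]; reflexivity. Qed.
Lemma genZ_iso g : genZ g -> isoZ g.
Proof. induction 1. reflexivity. apply isoM; auto using gens_iso. Qed.
Lemma genZ_det g : genZ g -> detZ g = 1.
Proof. induction 1. reflexivity. rewrite detM IHgenZ.
  unfold gens in H; destruct H as [->|[->|[->|[->|[->| ->]]]]]; reflexivity. Qed.

Lemma genZ_mul a b : genZ a -> genZ b -> genZ (mm a b).
Proof. induction 1; intros Hb. rewrite mm1l; auto. rewrite -mmA. constructor; auto. Qed.
Lemma genZ_gen s : gens s -> genZ s.
Proof. intros H. rewrite -(mm1r s). constructor; auto. constructor. Qed.

Lemma gens_inv s : gens s -> exists s', gens s' /\ mm s s' = IZ.
Proof. unfold gens; intros [->|[->|[->|[->|[->| ->]]]]].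
  exists GXi; split; [unfold gens; tauto|reflexivity].
  exists GYi; split; [unfold gens; tauto|reflexivity].
  exists GZi; split; [unfold gens; tauto|reflexivity].
  exists GX; split; [unfold gens; tauto|reflexivity].
  exists GY; split; [unfold gens; tauto|reflexivity].
  exists GZ; split; [unfold gens; tauto|reflexivity].
Qed.

Lemma genZ_inv g : genZ g -> exists g', genZ g' /\ mm g g' = IZ.
Proof.
  induction 1. exists IZ; split; [constructor|reflexivity].
  destruct IHgenZ as [g' [Hg' E]]. destruct (gens_inv s H) as [s' [Hs' E']].
  exists (mm g' s'). split. apply genZ_mul; auto using genZ_gen.
  rewrite -mmA (mmA g) E mm1l E'. reflexivity.
Qed.

Lemma conj_gen (sg : m3) : (sg = S01 \/ sg = S12 \/ sg = S20) ->
  forall s, gens s -> gens (mm sg (mm s sg)).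
Proof.
  intros Hsg s Hs. unfold gens in *.
  destruct Hsg as [->|[->| ->]]; destruct Hs as [->|[->|[->|[->|[->| ->]]]]];
  vm_compute; tauto.
Qed.

Lemma conj_genZ (sg : m3) : (sg = S01 \/ sg = S12 \/ sg = S20) ->
  forall g, genZ g -> genZ (mm sg (mm g sg)).
Proof.
  intros Hsg g Hg. assert (Hss : mm sg sg = IZ) by (destruct Hsg as [->|[->| ->]]; reflexivity).
  induction Hg. rewrite mm1l Hss. constructor.
  replace (mm sg (mm (mm s g) sg)) with (mm (mm sg (mm s sg)) (mm sg (mm g sg))).
  constructor; auto. apply conj_gen; auto.
  rewrite !mmA -(mmA (mm sg s) sg sg) Hss mm1r. reflexivity.
Qed.

Lemma genZ_C1 : genZ C1.
Proof. replace C1 with (mm GY (mm GX IZ)) by reflexivity.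
  repeat constructor; unfold gens; tauto. Qed.
Lemma genZ_C2 : genZ C2.
Proof. replace C2 with (mm GZi (mm GXi IZ)) by reflexivity.
  repeat constructor; unfold gens; tauto. Qed.

Lemma q_neg v : qv v < 0 -> c0 v * c1 v > 0 /\ c1 v * c2 v > 0 /\ c0 v * c2 v > 0.
Proof. destruct v as [a b c]; unfold qv; cbn [c0 c1 c2]; intros H.
  pose proof (Z.square_nonneg (a+b-c)); pose proof (Z.square_nonneg (b+c-a));
  pose proof (Z.square_nonneg (a+c-b)). split; [|split]; nia. Qed.

Lemma q_gens v s : gens s -> qv (vm v s) = qv v.
Proof. unfold gens; intros [->|[->|[->|[->|[->| ->]]]]];
  destruct v; unfold qv, vm, GX, GY, GZ, GXi, GYi, GZi; cbn [c0 c1 c2 e00 e01 e02 e10 e11 e12 e20 e21 e22]; ring. Qed.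

Lemma descent n : forall v, qv v = -6 -> c0 v > 0 -> c0 v + c1 v <= Z.of_nat n ->
  exists g, genZ g /\ vm v g = wv.
Proof.
  induction n as [|n IH]; intros v Hq Hp Hm.
  - destruct (q_neg v) as [H1 _]; [lia|]. simpl in Hm. nia.
  - destruct (q_neg v) as [H01 [H12 H02]]; [lia|].
    assert (P1 : c1 v > 0) by nia. assert (P2 : c2 v > 0) by nia.
    assert (step : forall s, gens s -> c0 (vm v s) > 0 ->
       c0 (vm v s) + c1 (vm v s) <= Z.of_nat n -> exists g, genZ g /\ vm v g = wv).
    { intros s Hs H0 Hn. destruct (IH (vm v s)) as [g [Hg E]]; auto.
      rewrite q_gens; auto.
      exists (mm s g); split. constructor; auto. rewrite vmA; auto. }
    destruct v as [a b c]; cbn [c0 c1 c2] in *.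
    destruct (Z_lt_ge_dec c b).
    { apply (step GXi); [unfold gens; tauto| |]; cbn; lia. }
    destruct (Z_lt_ge_dec c a).
    { apply (step GY); [unfold gens; tauto| |]; cbn; lia. }
    destruct (Z_lt_ge_dec (2*a+b) c).
    { apply (step GX); [unfold gens; tauto| |]; cbn; lia. }
    destruct (Z_lt_ge_dec (a+2*b) c).
    { apply (step GYi); [unfold gens; tauto| |].
      - assert (H := q_neg (vm (V3 a b c) GYi)). rewrite q_gens in H; [|unfold gens; tauto].
        unfold qv in Hq, H; cbn in Hq, H |- *. nia.
      - cbn; lia. }
    unfold qv in Hq; cbn [c0 c1 c2] in Hq.
    assert (HB : (a+b-c)*(a+b-c) <= a*b) by nia.
    assert (HAC : a * b <= 1) by nia.
    assert (a = 1) by nia. assert (b = 1) by nia. subst a b.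
    assert (c = 1 \/ c = 3) by nia.
    destruct H as [-> | ->].
    + exists IZ; split; [constructor|reflexivity].
    + exists (mm GX IZ); split; [constructor; [unfold gens; tauto|constructor]|reflexivity].
Qed.

Definition qG (v : v3) (M : m3) : Z :=
  c0 v * (e00 M * c0 v + e01 M * c1 v + e02 M * c2 v)
  + c1 v * (e10 M * c0 v + e11 M * c1 v + e12 M * c2 v)
  + c2 v * (e20 M * c0 v + e21 M * c1 v + e22 M * c2 v).
Lemma q_vm v m : qv (vm v m) = qG v (mm (mm m G0) (trZ m)).
Proof. destruct v, m; unfold qv, qG, vm, mm, trZ, G0;
  cbn [c0 c1 c2 e00 e01 e02 e10 e11 e12 e20 e21 e22]; ring. Qed.
Lemma q_iso v m : isoZ m -> qv (vm v m) = qv v.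
Proof. intros H; rewrite q_vm H. destruct v; unfold qv, qG, G0; cbn [c0 c1 c2 e00 e01 e02 e10 e11 e12 e20 e21 e22]; ring. Qed.

Lemma rowunit x y z : x + y + z = 1 ->
  2 * (x * x + y * y + z * z) - 4 * (x * y + y * z + z * x) = 2 ->
  (x = 1 /\ y = 0 /\ z = 0) \/ (x = 0 /\ y = 1 /\ z = 0) \/ (x = 0 /\ y = 0 /\ z = 1).
Proof.
  intros H1 H2. assert (z = 1 - x - y) by lia. subst z.
  assert (Hs : x*x + y*y + (1-x-y)*(1-x-y) = 1) by nia.
  pose proof (Z.square_nonneg x); pose proof (Z.square_nonneg y);
  pose proof (Z.square_nonneg (1-x-y)).
  assert (x * x <= 1) by lia. assert (y * y <= 1) by lia.
  assert (-1 <= x <= 1) by nia. assert (-1 <= y <= 1) by nia.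
  destruct (Z.eq_dec x (-1)); [subst; nia|].
  destruct (Z.eq_dec x 0); destruct (Z.eq_dec y (-1)); destruct (Z.eq_dec y 0);
  subst; try nia.
Qed.

Definition perms := IZ :: S01 :: S12 :: S20 :: C1 :: C2 :: nil.

Lemma perm_of m : isoZ m -> vm wv m = wv -> In m perms.
Proof.
  destruct m as [a b c d e f g h i]; unfold isoZ, vm, wv, mm, trZ, G0;
  cbn [c0 c1 c2 e00 e01 e02 e10 e11 e12 e20 e21 e22]; intros H W.
  injection H; clear H; intros E22 E21 E20 E12 E11 E10 E02 E01 E00.
  rewrite !Z.mul_1_l in W. injection W; clear W; intros W2 W1 W0.
  assert (g = 1 - a - d) by lia. assert (h = 1 - b - e) by lia. assert (i = 1 - c - f) by lia.
  subst g h i.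
  assert (R0 : a + b + c = 1) by nia.
  assert (R1 : d + e + f = 1) by nia.
  assert (R2 : (1-a-d) + (1-b-e) + (1-c-f) = 1) by lia.
  destruct (rowunit a b c R0 ltac:(nia)) as [[-> [-> ->]]|[[-> [-> ->]]|[-> [-> ->]]]];
  destruct (rowunit d e f R1 ltac:(nia)) as [[-> [-> ->]]|[[-> [-> ->]]|[-> [-> ->]]]];
  cbn in *; try lia; unfold perms; cbn; auto 10.
Qed.

Lemma isoNZ : isoZ NZ. Proof. reflexivity. Qed.

Lemma descent_mat m : isoZ m ->
  exists g, genZ g /\ (In (mm m g) perms \/ In (mm NZ (mm m g)) perms).
Proof.
  intros Hm. set (s := vm wv m).
  assert (Hq : qv s = -6) by (unfold s; rewrite q_iso; auto).
  destruct (q_neg s) as [H01 _]; [lia|].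
  destruct (Z_lt_ge_dec 0 (c0 s)) as [Hp|Hn].
  - destruct (descent (Z.to_nat (c0 s + c1 s)) s Hq ltac:(lia) ltac:(lia)) as [g [Hg E]].
    exists g; split; auto. left. apply perm_of.
    apply isoM; auto using genZ_iso. rewrite vmA; exact E.
  - set (s' := vm s NZ).
    assert (Hq' : qv s' = -6) by (unfold s'; rewrite q_iso; auto using isoNZ).
    assert (Ec : c0 s' = - c0 s) by (unfold s'; destruct s as [x y z]; unfold vm, NZ;
      cbn [c0 c1 c2 e00 e01 e02 e10 e11 e12 e20 e21 e22]; ring).
    assert (c0 s <> 0) by (intro E0; rewrite E0 in H01; lia).
    assert (Hp' : c0 s' > 0) by lia.
    destruct (descent (Z.to_nat (c0 s' + c1 s')) s' Hq' Hp' ltac:(lia)) as [g [Hg E]].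
    exists g; split; auto. right. apply perm_of.
    apply isoM; [exact isoNZ|]. apply isoM; auto using genZ_iso.
    rewrite mmA NZcomm -mmA !vmA. exact E.
Qed.

Lemma gens_pos v s : gens s -> qv v < 0 -> c0 v > 0 -> c0 (vm v s) > 0.
Proof.
  intros Hs Hq Hp. assert (Hq' : qv (vm v s) < 0) by (rewrite q_gens; auto).
  destruct (q_neg _ Hq) as [A [B C]]. destruct (q_neg _ Hq') as [A' [B' C']].
  assert (P1 : c1 v > 0) by nia. assert (P2 : c2 v > 0) by nia.
  destruct v as [a b c]; unfold gens in Hs;
  destruct Hs as [->|[->|[->|[->|[->| ->]]]]]; cbn in *; nia.
Qed.

Lemma genZ_pos g : genZ g -> forall v, qv v < 0 -> c0 v > 0 -> c0 (vm v g) > 0.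
Proof.
  induction 1; intros v Hq Hp.
  - destruct v; cbn in *; lia.
  - rewrite vmA. apply IHgenZ. rewrite q_gens; auto. apply gens_pos; auto.
Qed.

Lemma genZ_w g : genZ g -> c0 (vm wv g) > 0.
Proof. intros H; apply genZ_pos; auto; cbn; lia. Qed.

Definition m3eqb (a b : m3) : bool :=
  Z.eqb (e00 a) (e00 b) && Z.eqb (e01 a) (e01 b) && Z.eqb (e02 a) (e02 b) &&
  Z.eqb (e10 a) (e10 b) && Z.eqb (e11 a) (e11 b) && Z.eqb (e12 a) (e12 b) &&
  Z.eqb (e20 a) (e20 b) && Z.eqb (e21 a) (e21 b) && Z.eqb (e22 a) (e22 b).
Lemma m3eqb_eq a b : m3eqb a b = true -> a = b.
Proof.
  destruct a, b; unfold m3eqb; cbn [e00 e01 e02 e10 e11 e12 e20 e21 e22].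
  move=> /andP [/andP [/andP [/andP [/andP [/andP [/andP [/andP
    [/Z.eqb_eq -> /Z.eqb_eq ->] /Z.eqb_eq ->] /Z.eqb_eq ->] /Z.eqb_eq ->] /Z.eqb_eq ->]
    /Z.eqb_eq ->] /Z.eqb_eq ->] /Z.eqb_eq ->]. reflexivity.
Qed.
Fixpoint inb (m : m3) (l : list m3) : bool :=
  match l with nil => false | cons x l' => m3eqb m x || inb m l' end.
Lemma inb_In m l : inb m l = true -> In m l.
Proof.
  induction l as [|x l IH]; simpl; [discriminate|].
  move/orP => [H|H]; [left; symmetry; apply m3eqb_eq|right]; auto.
Qed.

Definition swaps := S01 :: S12 :: S20 :: nil.
Definition Hlist (sg : m3) := IZ :: sg :: NZ :: mm NZ sg :: nil.

Lemma Hclosed sg hz : In sg swaps -> In hz (Hlist sg) ->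
  In (mm sg hz) (Hlist sg) /\ In (mm NZ hz) (Hlist sg).
Proof.
  unfold swaps, Hlist; intros Hs Hh; simpl In in Hs, Hh.
  destruct Hs as [<-|[<-|[<-|[]]]]; destruct Hh as [<-|[<-|[<-|[<-|[]]]]];
  split; apply inb_In; vm_compute; reflexivity.
Qed.

Lemma Hself sg hz : In sg swaps -> In hz (Hlist sg) -> mm hz hz = IZ.
Proof.
  unfold swaps, Hlist; intros Hs Hh; simpl In in Hs, Hh.
  destruct Hs as [<-|[<-|[<-|[]]]]; destruct Hh as [<-|[<-|[<-|[<-|[]]]]];
  vm_compute; reflexivity.
Qed.

Lemma genZ_even p : p = IZ \/ p = C1 \/ p = C2 -> genZ p.
Proof. intros [->|[->| ->]]; [constructor|exact genZ_C1|exact genZ_C2]. Qed.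

Lemma hsplit sg p : In sg swaps -> In p perms ->
  exists hz, In hz (Hlist sg) /\ genZ (mm hz p).
Proof.
  unfold swaps, perms; intros Hs Hp; simpl In in Hs, Hp.
  destruct Hs as [<-|[<-|[<-|[]]]]; destruct Hp as [<-|[<-|[<-|[<-|[<-|[<-|[]]]]]]];
  first [ exists IZ; split; [apply inb_In; vm_compute; reflexivity| apply genZ_even; vm_compute; solve [auto 6]]
        | exists S01; split; [apply inb_In; vm_compute; reflexivity| apply genZ_even; vm_compute; solve [auto 6]]
        | exists S12; split; [apply inb_In; vm_compute; reflexivity| apply genZ_even; vm_compute; solve [auto 6]]
        | exists S20; split; [apply inb_In; vm_compute; reflexivity| apply genZ_even; vm_compute; solve [auto 6]] ].
Qed.

Lemma conjN_gen a g : mm (mm NZ a) (mm g (mm NZ a)) = mm a (mm g a).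
Proof. m3eq. Qed.

Lemma conjH sg hz g : In sg swaps -> In hz (Hlist sg) -> genZ g -> genZ (mm hz (mm g hz)).
Proof.
  intros Hs Hh Hg. assert (Hs' : sg = S01 \/ sg = S12 \/ sg = S20)
    by (unfold swaps in Hs; simpl in Hs; destruct Hs as [<-|[<-|[<-|[]]]]; auto).
  unfold Hlist in Hh; simpl In in Hh.
  destruct Hh as [<-|[<-|[<-|[<-|[]]]]].
  - rewrite mm1l mm1r; auto.
  - apply conj_genZ; auto.
  - rewrite mmN; auto.
  - rewrite conjN_gen. apply conj_genZ; auto.
Qed.

Lemma Hmeet sg hz : In sg swaps -> In hz (Hlist sg) -> genZ hz -> hz = IZ.
Proof.
  intros Hs Hh Hg. pose proof (genZ_det hz Hg) as Hd. pose proof (genZ_w hz Hg) as Hw.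
  unfold Hlist, swaps in *; simpl In in Hs, Hh.
  destruct Hs as [<-|[<-|[<-|[]]]]; destruct Hh as [<-|[<-|[<-|[<-|[]]]]];
  try reflexivity; vm_compute in Hd, Hw; discriminate || lia.
Qed.

Lemma Hiso sg hz : In sg swaps -> In hz (Hlist sg) -> isoZ hz.
Proof.
  unfold swaps, Hlist; intros Hs Hh; simpl In in Hs, Hh.
  destruct Hs as [<-|[<-|[<-|[]]]]; destruct Hh as [<-|[<-|[<-|[<-|[]]]]];
  vm_compute; reflexivity.
Qed.

Lemma assoc4 a b X Y : mm (mm a b) (mm (mm b X) Y) = mm a (mm (mm b b) (mm X Y)).
Proof. m3eq. Qed.
Lemma NN2 W Y : mm NZ (mm (mm NZ W) Y) = mm W Y.
Proof. m3eq. Qed.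

Lemma decompZ sg m : In sg swaps -> isoZ m ->
  exists hz g, In hz (Hlist sg) /\ genZ g /\ m = mm hz g.
Proof.
  intros Hs Hm. destruct (descent_mat m Hm) as [g [Hg [Hp|Hp]]];
  destruct (genZ_inv g Hg) as [g' [Hg' Egg]].
  - destruct (hsplit sg _ Hs Hp) as [hz [Hh Hhp]].
    exists hz, (mm (mm hz (mm m g)) g'). split; [exact Hh|split].
    + apply genZ_mul; auto.
    + rewrite mmA mmA (Hself sg hz Hs Hh) mm1l -mmA Egg mm1r. reflexivity.
  - destruct (hsplit sg _ Hs Hp) as [hz [Hh Hhp]].
    exists (mm NZ hz), (mm (mm hz (mm NZ (mm m g))) g'). split.
    + exact (proj2 (Hclosed sg hz Hs Hh)).
    + split; [apply genZ_mul; auto|].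
      rewrite assoc4 (Hself sg hz Hs Hh) mm1l NN2.
      rewrite -mmA Egg mm1r. reflexivity.
Qed.

End ZM.
Import ZM.

Import GRing.Theory.
Local Open Scope ring_scope.

Section FPart.
Variable F : fieldType.
Hypothesis charF0 : [pchar F] =i pred0.

Local Notation T := (GRing.PzSemiRing.sort F).
Definition radd (x y : T) : T := x + y.
Definition rmul (x y : T) : T := x * y.
Definition ropp (x : T) : T := - x.
Definition rsub (x y : T) : T := radd x (ropp y).
Definition r0 : T := 0.
Definition r1 : T := 1.
Lemma Fring : @ring_theory T r0 r1 radd rmul rsub ropp eq.
Proof. rewrite /radd /rmul /rsub /ropp /r0 /r1. split=> //=; [exact: add0r|exact: addrC|exact: addrA|exact: mul1r|exact: mulrC|exact: mulrA|exact: mulrDl|exact: subrr]. Qed.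
Add Ring Fr : Fring.
Lemma fr_helper (x y : T) : @eq T (rmul r1 x) (rmul r1 y) -> x = y.
Proof. by rewrite /rmul /r1 !mul1r. Qed.
Definition atomF (x : T) : T := x.
Ltac trn a n := lazymatch n with
  | O => constr:(r0) | S O => constr:(a)
  | S ?m => let m' := trn a m in constr:(radd a m') end.
Ltac tr t := lazymatch t with
  | ?a + ?b => let a' := tr a in let b' := tr b in constr:(radd a' b')
  | ?a * ?b => let a' := tr a in let b' := tr b in constr:(rmul a' b')
  | - ?a => let a' := tr a in constr:(ropp a')
  | ?a *+ ?n => let a' := tr a in
       let n' := eval compute in n in
       match n' with
       | O => constr:(r0)
       | S _ => trn a' n'
       | _ => constr:(atomF ((a' : T) *+ n)) end
  | 0 => constr:(r0) | 1 => constr:(r1)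
  | _ => constr:(atomF t) end.
Ltac fring := lazymatch goal with |- ?l = ?r =>
  let l' := tr l in let r' := tr r in change (@eq T l' r'); refine (fr_helper _ _ _); ring end.

Definition zF (z : Z) : F := (Z.to_nat z)%:R - (Z.to_nat (- z))%:R.

Lemma zF_sub (a b : nat) : zF (Z.of_nat a - Z.of_nat b) = a%:R - b%:R.
Proof.
  rewrite /zF.
  set p := Z.to_nat _. set n := Z.to_nat _.
  have H : (p + b)%coq_nat = (n + a)%coq_nat by rewrite /p /n; lia.
  have HF : p%:R + b%:R = n%:R + a%:R :> F by rewrite -!natrD -!plusE H.
  transitivity ((p%:R + b%:R) - b%:R - n%:R : F). fring.
  rewrite HF; fring.
Qed.

Lemma zF_nat (a : nat) : zF (Z.of_nat a) = a%:R.
Proof. by rewrite -(Z.sub_0_r (Z.of_nat a)) -[0%Z]/(Z.of_nat 0) zF_sub subr0. Qed.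

Lemma Zdec (z : Z) : z = (Z.of_nat (Z.to_nat z) - Z.of_nat (Z.to_nat (- z)))%Z.
Proof. lia. Qed.

Lemma zFD a b : zF (a + b) = zF a + zF b.
Proof.
  rewrite (Zdec a) (Zdec b).
  set p := Z.to_nat a. set n := Z.to_nat (-a). set p' := Z.to_nat b. set n' := Z.to_nat (-b).
  have -> : (Z.of_nat p - Z.of_nat n + (Z.of_nat p' - Z.of_nat n') =
     Z.of_nat (p + p')%coq_nat - Z.of_nat (n + n')%coq_nat)%Z by lia.
  rewrite !zF_sub !plusE !natrD; fring.
Qed.

Lemma zFM a b : zF (a * b) = zF a * zF b.
Proof.
  rewrite (Zdec a) (Zdec b).
  set p := Z.to_nat a. set n := Z.to_nat (-a). set p' := Z.to_nat b. set n' := Z.to_nat (-b).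
  have -> : ((Z.of_nat p - Z.of_nat n) * (Z.of_nat p' - Z.of_nat n') =
     Z.of_nat (p * p' + n * n')%coq_nat - Z.of_nat (p * n' + n * p')%coq_nat)%Z
    by rewrite !Nat2Z.inj_add !Nat2Z.inj_mul; ring.
  rewrite !zF_sub ?plusE ?multE !natrD !natrM; fring.
Qed.

Lemma zFN a : zF (- a) = - zF a.
Proof. rewrite /zF Z.opp_involutive; fring. Qed.
Lemma zF0 : zF 0 = 0. Proof. by rewrite /zF /= subr0. Qed.
Lemma zF1 : zF 1 = 1. Proof. by rewrite /zF /= subr0. Qed.
Lemma zFpos p : zF (Zpos p) = (Pos.to_nat p)%:R.
Proof. by rewrite -zF_nat positive_nat_Z. Qed.
Lemma zFneg p : zF (Zneg p) = - (Pos.to_nat p)%:R.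
Proof. by rewrite -zF_nat positive_nat_Z -zFN. Qed.

Lemma natr_inj (a b : nat) : a%:R = b%:R :> F -> a = b.
Proof.
  move=> H. have cF := (pcharf0P _).1 charF0.
  wlog le : a b H / leq a b.
    move=> W. case: (leqP a b) => [l|l]; first exact: W. symmetry; apply: W => //; exact: ltnW.
  apply/eqP; rewrite eqn_leq le /=.
  have : (b - a)%:R == 0 :> F by rewrite natrB // H subrr.
  by rewrite cF subn_eq0.
Qed.

Lemma zF_inj a b : zF a = zF b -> a = b.
Proof.
  move=> H. have H0 : zF (a - b) = 0 by rewrite zFD zFN H subrr.
  move: H0; rewrite /zF => /eqP; rewrite subr_eq0 => /eqP /natr_inj; lia.
Qed.


Definition getZ (m : m3) (i j : nat) : Z :=
  match i, j with
  | 0, 0 => e00 m | 0, 1 => e01 m | 0, _ => e02 m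
  | 1, 0 => e10 m | 1, 1 => e11 m | 1, _ => e12 m
  | _, 0 => e20 m | _, 1 => e21 m | _, _ => e22 m end.
Definition embed (m : m3) : 'M[F]_3 := \matrix_(i < 3, j < 3) zF (getZ m i j).
Definition getV (v : v3) (j : nat) : Z :=
  match j with 0 => c0 v | 1 => c1 v | _ => c2 v end.
Definition zrow (v : v3) : 'rV[F]_3 := \row_(j < 3) zF (getV v j).

Lemma i0E : nat_of_ord i0 = 0%nat. Proof. by rewrite /i0 inordK. Qed.
Lemma i1E : nat_of_ord i1 = 1%nat. Proof. by rewrite /i1 inordK. Qed.
Lemma i2E : nat_of_ord i2 = 2%nat. Proof. by rewrite /i2 inordK. Qed.

Lemma sum3 (f : 'I_3 -> F) : \sum_(k < 3) f k = f i0 + f i1 + f i2.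
Proof.
  rewrite !big_ord_recr big_ord0 /= add0r.
  congr (_ + _ + _); congr f; apply/val_inj; by rewrite /= ?i0E ?i1E ?i2E.
Qed.

Ltac ord3 i := let H := fresh in case: i => [[|[|[|?]]] H] //.

Lemma eqI3 (a b : 'I_3) : (a == b) = (nat_of_ord a == nat_of_ord b). Proof. by []. Qed.

Lemma ordE3 (i : 'I_3) : i = i0 \/ i = i1 \/ i = i2.
Proof.
  ord3 i; [left|right;left|right;right]; apply/val_inj; by rewrite /= ?i0E ?i1E ?i2E.
Qed.

Ltac zsimp := rewrite ?zFD ?zFM ?zFN ?zFpos ?zFneg ?zF0 ?zF1.

Lemma embedE (m : m3) (i j : 'I_3) : embed m i j = zF (getZ m i j).
Proof. by rewrite mxE. Qed.

Lemma embedM a b : embed (mm a b) = embed a *m embed b.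
Proof.
  apply/matrixP => i j; rewrite !mxE sum3 !mxE ?i0E ?i1E ?i2E.
  by ord3 i; ord3 j; rewrite /= !zFD !zFM.
Qed.

Lemma embed_tr a : embed (trZ a) = (embed a)^T.
Proof. apply/matrixP => i j; rewrite !mxE. by ord3 i; ord3 j. Qed.

Lemma embed_inj a b : embed a = embed b -> a = b.
Proof.
  move=> /matrixP H.
  have E : forall i j : 'I_3, getZ a i j = getZ b i j.
    move=> i j; apply: zF_inj; move: (H i j); by rewrite !mxE.
  clear H.
  case: a E => a00 a01 a02 a10 a11 a12 a20 a21 a22;
  case: b => b00 b01 b02 b10 b11 b12 b20 b21 b22 E.
  move: (E i0 i0) (E i0 i1) (E i0 i2) (E i1 i0) (E i1 i1) (E i1 i2) (E i2 i0) (E i2 i1) (E i2 i2).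
  rewrite ?i0E ?i1E ?i2E /= => -> -> -> -> -> -> -> -> ->. by [].
Qed.

Lemma embed1 : embed IZ = 1%:M.
Proof. apply/matrixP => i j; rewrite !mxE. ord3 i; ord3 j; rewrite /= ?zF0 ?zF1 //. Qed.

Lemma zrowM z m : zrow z *m embed m = zrow (vm z m).
Proof.
  apply/matrixP => i j; rewrite !mxE sum3 !mxE ?i0E ?i1E ?i2E.
  by ord3 j; rewrite /= !zFD !zFM.
Qed.


Definition j0 : 'I_2 := @Ordinal 2 0 isT.
Definition j1 : 'I_2 := @Ordinal 2 1 isT.
Lemma sum2 (f : 'I_2 -> F) : \sum_(k < 2) f k = f j0 + f j1.
Proof.
  rewrite !big_ord_recr big_ord0 /= add0r.
  by congr (_ + _); congr f; apply/val_inj.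
Qed.

Lemma tformE (u v : 'rV[F]_3) : tform u v =
  2 * (u 0 i0 * v 0 i0 + u 0 i1 * v 0 i1 + u 0 i2 * v 0 i2)
  - 2 * (u 0 i0 * v 0 i1 + u 0 i1 * v 0 i0 + u 0 i0 * v 0 i2 + u 0 i2 * v 0 i0
         + u 0 i1 * v 0 i2 + u 0 i2 * v 0 i1).
Proof.
  rewrite /tform /mxtrace sum2 !mxE !sum2 /emb /ex /ey /ez /mx2 !mxE /=.
  fring.
Qed.

Lemma tformG (u v : 'rV[F]_3) : tform u v = (u *m embed G0 *m v^T) 0 0.
Proof.
  rewrite tformE !mxE sum3 !mxE !sum3 !mxE ?i0E ?i1E ?i2E /=.
  rewrite ?zFpos ?zFneg. fring.
Qed.


Lemma delta_entry (M : 'M[F]_3) (i j : 'I_3) : (delta_mx (0 : 'I_1) i *m M *m (delta_mx (0 : 'I_1) j)^T) 0 0 = M i j.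
Proof. by rewrite trmx_delta -rowE -colE !mxE. Qed.

Lemma iso_embed m : isoZ m -> forall u v : 'rV[F]_3,
  tform (u *m embed m) (v *m embed m) = tform u v.
Proof.
  move=> H u v. rewrite !tformG trmx_mul !mulmxA.
  have E : embed m *m embed G0 *m (embed m)^T = embed G0.
    by rewrite -embed_tr -!embedM H.
  by rewrite -(mulmxA u (embed m)) -(mulmxA u) E.
Qed.

Lemma int_zF (n : int) : exists z, n%:~R = zF z :> F.
Proof.
  case: n => k.
  - exists (Z.of_nat k). by rewrite zF_nat -pmulrn.
  - exists (- Z.of_nat k.+1)%Z. by rewrite zFN zF_nat NegzE intrN -pmulrn.
Qed.

Lemma zF_int z : exists n : int, zF z = n%:~R.
Proof.
  exists ((Z.to_nat z)%:Z - (Z.to_nat (- z))%:Z). by rewrite intrB -!pmulrn.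
Qed.

Lemma inL_zrow (v : 'rV[F]_3) : inL v <-> exists z, v = zrow z.
Proof.
  split.
  - move=> H. case: (H i0) => n0 E0. case: (H i1) => n1 E1. case: (H i2) => n2 E2.
    case: (int_zF n0) => z0 F0. case: (int_zF n1) => z1 F1. case: (int_zF n2) => z2 F2.
    exists (V3 z0 z1 z2). apply/matrixP => i j. rewrite (ord1 i) !mxE.
    case: (ordE3 j) => [->|[->|->]]; rewrite ?i0E ?i1E ?i2E /=.
    + by rewrite E0 F0. + by rewrite E1 F1. + by rewrite E2 F2.
  - move=> [z ->] j. rewrite mxE. exact: zF_int.
Qed.

Lemma vm1 z : vm z IZ = z.
Proof. by case: z => a b c; rewrite /vm /IZ /=; congr V3; ring. Qed.

Lemma isomZ_embed m m' : isoZ m -> mm m m' = IZ -> IsomZ (embed m).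
Proof.
  move=> Hm Hm'.
  have U : embed m *m embed m' = 1%:M by rewrite -embedM Hm' embed1.
  have U' : mm m' m = IZ.
    by apply: embed_inj; rewrite embedM embed1; apply: mulmx1C.
  split.
  - by case: (mulmx1_unit U).
  - exact: iso_embed.
  - move=> v /inL_zrow [z ->]. apply/inL_zrow. exists (vm z m). exact: zrowM.
  - move=> w /inL_zrow [z ->]. exists (zrow (vm z m')).
    + apply/inL_zrow; by exists (vm z m').
    + by rewrite zrowM -vmA U' vm1.
Qed.

Lemma IsomZ_embed (A : 'M[F]_3) : IsomZ A -> exists m, A = embed m /\ isoZ m.
Proof.
  case=> Hu Hf HL Hs.
  have Hrow : forall i : 'I_3, exists z, delta_mx (0 : 'I_1) i *m A = zrow z.
    move=> i. apply/inL_zrow. apply: HL. apply/inL_zrow.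
    case: (ordE3 i) => [->|[->|->]].
    - exists (V3 1 0 0). apply/matrixP => a j; rewrite !mxE (ord1 a) /=.
      case: (ordE3 j) => [->|[->|->]]; by rewrite ?eqI3 ?i0E ?i1E ?i2E /= ?zF0 ?zF1.
    - exists (V3 0 1 0). apply/matrixP => a j; rewrite !mxE (ord1 a) /=.
      case: (ordE3 j) => [->|[->|->]]; by rewrite ?eqI3 ?i0E ?i1E ?i2E /= ?zF0 ?zF1.
    - exists (V3 0 0 1). apply/matrixP => a j; rewrite !mxE (ord1 a) /=.
      case: (ordE3 j) => [->|[->|->]]; by rewrite ?eqI3 ?i0E ?i1E ?i2E /= ?zF0 ?zF1.
  case: (Hrow i0) => r0' E0. case: (Hrow i1) => r1' E1. case: (Hrow i2) => r2' E2.
  set m := M3 (c0 r0') (c1 r0') (c2 r0') (c0 r1') (c1 r1') (c2 r1') (c0 r2') (c1 r2') (c2 r2').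
  have HA : A = embed m.
    apply/matrixP => i j.
    have Ei : forall k : 'I_3, A i k = (delta_mx (0 : 'I_1) i *m A) 0 k.
      by move=> k; rewrite -rowE mxE.
    rewrite Ei embedE. case: (ordE3 i) => [->|[->|->]];
      [rewrite E0|rewrite E1|rewrite E2]; rewrite mxE;
      case: (ordE3 j) => [->|[->|->]]; by rewrite ?i0E ?i1E ?i2E.
  exists m; split => //.
  apply: embed_inj. apply/matrixP => i j.
  rewrite embedM embedM embed_tr -HA -(delta_entry (A *m embed G0 *m A^T)).
  have -> : delta_mx (0 : 'I_1) i *m (A *m embed G0 *m A^T) *m (delta_mx (0 : 'I_1) j)^T
     = (delta_mx 0 i *m A) *m embed G0 *m (delta_mx 0 j *m A)^T by rewrite trmx_mul !mulmxA.
  by rewrite -tformG Hf tformG delta_entry.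
Qed.


Definition rinv (x : T) : T := x^-1.
Definition rdiv (x y : T) : T := rmul x (rinv y).
Lemma Ffield : @field_theory T r0 r1 radd rmul rsub ropp rdiv rinv eq.
Proof.
  split.
  - exact: Fring.
  - by rewrite /r1 /r0; apply/eqP; rewrite oner_eq0.
  - by [].
  - move=> p Hp. rewrite /rinv /rmul /r1 mulVf //. by apply/eqP.
Qed.
Add Field Ff : Ffield.
Lemma fr_helper2 (x y : T) : @eq T (rmul r1 x) (rmul r1 y) -> x = y.
Proof. by rewrite /rmul /r1 !mul1r. Qed.

Ltac trf t := lazymatch t with
  | ?a + ?b => let a' := trf a in let b' := trf b in constr:(radd a' b')
  | ?a * ?b => let a' := trf a in let b' := trf b in constr:(rmul a' b')
  | - ?a => let a' := trf a in constr:(ropp a')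
  | ?a ^-1 => let a' := trf a in constr:(rinv a')
  | ?a *+ ?n => let a' := trf a in
       let n' := eval compute in n in
       match n' with
       | O => constr:(r0)
       | S _ => trn a' n'
       | _ => constr:(atomF ((a' : T) *+ n)) end
  | 0 => constr:(r0) | 1 => constr:(r1)
  | _ => constr:(atomF t) end.

Lemma natF_neq0 n : (n.+1)%:R <> 0 :> F.
Proof. move/eqP. by rewrite ((pcharf0P _).1 charF0). Qed.

Lemma nzM (x y : T) : x <> r0 -> y <> r0 -> rmul x y <> r0.
Proof. rewrite /rmul /r0 => /eqP Hx /eqP Hy; apply/eqP; exact: mulf_neq0. Qed.
Ltac nzside1 := first [exact (natF_neq0 0) | exact (natF_neq0 1) | exact (natF_neq0 2)
  | exact (natF_neq0 3) | exact (natF_neq0 4) | exact (natF_neq0 5) | exact (natF_neq0 6)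
  | (apply: nzM; nzside1)].
Ltac nzside := repeat match goal with |- _ /\ _ => split end; first [nzside1 | exact (natF_neq0 0) | exact (natF_neq0 1) | exact (natF_neq0 2)
  | exact (natF_neq0 3) | exact (natF_neq0 4) | exact (natF_neq0 5) | exact (natF_neq0 6)
  | exact (natF_neq0 7) | exact (natF_neq0 8) | exact (natF_neq0 11) | exact (natF_neq0 23)].

Ltac ffield := lazymatch goal with |- ?l = ?r =>
  let l' := trf l in let r' := trf r in change (@eq T l' r'); refine (fr_helper2 _ _ _); field; nzside end.

Lemma testf (a : F) : (2%:R)^-1 * (a *+ 2) = a.
Proof. ffield. Qed.


Lemma ordE2 (i : 'I_2) : i = j0 \/ i = j1.
Proof. case: i => [[|[|?]] H] //; [left|right]; exact/val_inj. Qed.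

Lemma mx2_mul (a b c d a' b' c' d' : F) : mx2 a b c d *m mx2 a' b' c' d' =
  mx2 (a*a' + b*c') (a*b' + b*d') (c*a' + d*c') (c*b' + d*d').
Proof.
  apply/matrixP => i j; rewrite !mxE sum2 !mxE.
  by case: (ordE2 i) => ->; case: (ordE2 j) => ->.
Qed.
Lemma mx2_add (a b c d a' b' c' d' : F) : mx2 a b c d + mx2 a' b' c' d' =
  mx2 (a + a') (b + b') (c + c') (d + d').
Proof. apply/matrixP => i j; rewrite !mxE. by case: (ordE2 i) => ->; case: (ordE2 j) => ->. Qed.
Lemma mx2_opp (a b c d : F) : - mx2 a b c d = mx2 (- a) (- b) (- c) (- d).
Proof. apply/matrixP => i j; rewrite !mxE. by case: (ordE2 i) => ->; case: (ordE2 j) => ->. Qed.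
Lemma mx2_scale (k a b c d : F) : k *: mx2 a b c d = mx2 (k * a) (k * b) (k * c) (k * d).
Proof. apply/matrixP => i j; rewrite !mxE. by case: (ordE2 i) => ->; case: (ordE2 j) => ->. Qed.

Lemma emb_mx2 (v : 'rV[F]_3) : emb v = mx2 (v 0 i0 - v 0 i1 - v 0 i2) (2 * v 0 i1)
   (- (2 * v 0 i2)) (- v 0 i0 + v 0 i1 + v 0 i2).
Proof.
  rewrite /emb /ex /ey /ez !mx2_scale !mx2_add. congr mx2; fring.
Qed.

Lemma ad_mx2 (a b c d a' b' c' d' : F) : ad (mx2 a b c d) (mx2 a' b' c' d') =
  mx2 ((a*a' + b*c') - (a'*a + b'*c)) ((a*b' + b*d') - (a'*b + b'*d))
      ((c*a' + d*c') - (c'*a + d'*c)) ((c*b' + d*d') - (c'*b + d'*d)).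
Proof. by rewrite /ad !mx2_mul mx2_opp mx2_add. Qed.

Lemma exp_adE (a u : 'M[F]_2) : exp_ad a u =
  u + ad a u + (2%:R)^-1 *: ad a (ad a u) + (6%:R)^-1 *: ad a (ad a (ad a u)).
Proof.
  rewrite /exp_ad !big_ord_recr big_ord0 /= add0r.
  by rewrite invr1 !scale1r.
Qed.

Lemma coordE (a b c d : F) (j : 'I_3) : Defs.coord (mx2 a b c d) 0 j =
  if nat_of_ord j == 0%nat then a + b / 2 - c / 2 else if nat_of_ord j == 1%nat then b / 2 else - (c / 2).
Proof.
  rewrite /Defs.coord !mxE. by case: (ordE3 j) => [->|[->|->]]; rewrite ?eqI3 ?i0E ?i1E ?i2E.
Qed.


Lemma exp_xs (v : 'rV[F]_3) : Defs.coord (exp_ad (xs F) (emb v)) = v *m embed GX.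
Proof.
  rewrite exp_adE emb_mx2 /xs !ad_mx2 !mx2_scale !mx2_add.
  apply/matrixP => i j; rewrite (ord1 i) coordE !mxE sum3 !mxE ?i0E ?i1E ?i2E.
  case: (ordE3 j) => [->|[->|->]]; rewrite ?i0E ?i1E ?i2E /= ?zFpos ?zFneg ?zF0 ?zF1; ffield.
Qed.

Lemma exp_ys (v : 'rV[F]_3) : Defs.coord (exp_ad (ys F) (emb v)) = v *m embed GY.
Proof.
  rewrite exp_adE emb_mx2 /ys !ad_mx2 !mx2_scale !mx2_add.
  apply/matrixP => i j; rewrite (ord1 i) coordE !mxE sum3 !mxE ?i0E ?i1E ?i2E.
  case: (ordE3 j) => [->|[->|->]]; rewrite ?i0E ?i1E ?i2E /= ?zFpos ?zFneg ?zF0 ?zF1; ffield.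
Qed.

Lemma exp_zs (v : 'rV[F]_3) : Defs.coord (exp_ad (zs F) (emb v)) = v *m embed GZ.
Proof.
  rewrite exp_adE emb_mx2 /zs !ad_mx2 !mx2_scale !mx2_add.
  apply/matrixP => i j; rewrite (ord1 i) coordE !mxE sum3 !mxE ?i0E ?i1E ?i2E.
  case: (ordE3 j) => [->|[->|->]]; rewrite ?i0E ?i1E ?i2E /= ?zFpos ?zFneg ?zF0 ?zF1; ffield.
Qed.


Lemma expmx_X : exp_ad_mx (xs F) = embed GX.
Proof. apply/matrixP => i j. by rewrite /exp_ad_mx /lin1_mx mxE exp_xs -rowE mxE. Qed.
Lemma expmx_Y : exp_ad_mx (ys F) = embed GY.
Proof. apply/matrixP => i j. by rewrite /exp_ad_mx /lin1_mx mxE exp_ys -rowE mxE. Qed.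
Lemma expmx_Z : exp_ad_mx (zs F) = embed GZ.
Proof. apply/matrixP => i j. by rewrite /exp_ad_mx /lin1_mx mxE exp_zs -rowE mxE. Qed.

Lemma i01 : (i0 == i1) = false. Proof. by rewrite eqI3 i0E i1E. Qed.
Lemma i02 : (i0 == i2) = false. Proof. by rewrite eqI3 i0E i2E. Qed.
Lemma i12 : (i1 == i2) = false. Proof. by rewrite eqI3 i1E i2E. Qed.
Lemma n01 : i0 != i1. Proof. by rewrite i01. Qed.
Lemma n02 : i0 != i2. Proof. by rewrite i02. Qed.
Lemma n12 : i1 != i2. Proof. by rewrite i12. Qed.
Lemma n10 : i1 != i0. Proof. by rewrite eq_sym i01. Qed.
Lemma n20 : i2 != i0. Proof. by rewrite eq_sym i02. Qed.
Lemma n21 : i2 != i1. Proof. by rewrite eq_sym i12. Qed.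

Lemma swap01 : @swap F i0 i1 = embed S01. Proof. apply/matrixP => a b; rewrite /swap tperm_mxEsub embedE mxE -?perm.fun_of_perm.unlock;
  case: (ordE3 a) => [->|[->|->]];
  (first [rewrite tpermL | rewrite tpermR | rewrite tpermD ?n01 ?n02 ?n12 ?n10 ?n20 ?n21 //]); rewrite mxE;
  case: (ordE3 b) => [->|[->|->]]; rewrite ?eqI3 ?i0E ?i1E ?i2E /= ?zF0 ?zF1 //. Qed.
Lemma swap12 : @swap F i1 i2 = embed S12. Proof. apply/matrixP => a b; rewrite /swap tperm_mxEsub embedE mxE -?perm.fun_of_perm.unlock;
  case: (ordE3 a) => [->|[->|->]];
  (first [rewrite tpermL | rewrite tpermR | rewrite tpermD ?n01 ?n02 ?n12 ?n10 ?n20 ?n21 //]); rewrite mxE;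
  case: (ordE3 b) => [->|[->|->]]; rewrite ?eqI3 ?i0E ?i1E ?i2E /= ?zF0 ?zF1 //. Qed.
Lemma swap20 : @swap F i2 i0 = embed S20. Proof. apply/matrixP => a b; rewrite /swap tperm_mxEsub embedE mxE -?perm.fun_of_perm.unlock;
  case: (ordE3 a) => [->|[->|->]];
  (first [rewrite tpermL | rewrite tpermR | rewrite tpermD ?n01 ?n02 ?n12 ?n10 ?n20 ?n21 //]); rewrite mxE;
  case: (ordE3 b) => [->|[->|->]]; rewrite ?eqI3 ?i0E ?i1E ?i2E /= ?zF0 ?zF1 //. Qed.

Lemma minus1E : @minus1 F = embed NZ.
Proof.
  apply/matrixP => a b; rewrite /minus1 !mxE.
  case: (ordE3 a) => [->|[->|->]]; case: (ordE3 b) => [->|[->|->]];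
  rewrite ?eqI3 ?i0E ?i1E ?i2E /= ?zFneg ?zF0 ?zF1 ?oppr0 //.
Qed.

Lemma invmx_embed a b : mm a b = IZ -> invmx (embed a) = embed b.
Proof.
  move=> H. have U : embed a *m embed b = 1%:M by rewrite -embedM H embed1.
  case: (mulmx1_unit U) => Ua _.
  by rewrite -[invmx _]mulmx1 -U mulmxA mulVmx // mul1mx.
Qed.


Lemma Ggrp_char (a : 'M[F]_3) : @Ggrp F a <-> exists g, genZ g /\ a = embed g.
Proof.
  split.
  - elim.
    + exists IZ; split; [constructor | by rewrite embed1].
    + move=> s g Hs _ [g' [Hg' ->]].
      case: Hs => [->|[->|->]]; rewrite ?expmx_X ?expmx_Y ?expmx_Z -embedM;
      (eexists; split; [ | reflexivity]; constructor; [rewrite /gens; tauto|exact Hg']).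
    + move=> s g Hs _ [g' [Hg' ->]].
      case: Hs => [->|[->|->]]; rewrite ?expmx_X ?expmx_Y ?expmx_Z.
      * rewrite (@invmx_embed GX GXi) // -embedM.
        (eexists; split; [ | reflexivity]; constructor; [rewrite /gens; tauto|exact Hg']).
      * rewrite (@invmx_embed GY GYi) // -embedM.
        (eexists; split; [ | reflexivity]; constructor; [rewrite /gens; tauto|exact Hg']).
      * rewrite (@invmx_embed GZ GZi) // -embedM.
        (eexists; split; [ | reflexivity]; constructor; [rewrite /gens; tauto|exact Hg']).
  - move=> [g [Hg ->]]. elim: Hg.
    + rewrite embed1; constructor.
    + move=> s g0 Hs _ IH. rewrite embedM.
      case: Hs => [->|[->|[->|[->|[->|->]]]]].
      * rewrite -expmx_X. apply: genM => //. by left.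
      * rewrite -expmx_Y. apply: genM => //. by right; left.
      * rewrite -expmx_Z. apply: genM => //. by right; right.
      * rewrite -(@invmx_embed GX GXi) // -expmx_X. apply: genV => //. by left.
      * rewrite -(@invmx_embed GY GYi) // -expmx_Y. apply: genV => //. by right; left.
      * rewrite -(@invmx_embed GZ GZi) // -expmx_Z. apply: genV => //. by right; right.
Qed.

Section Pair.
Variables (i j : 'I_3) (sg : m3).
Hypothesis Hsg : In sg swaps.
Hypothesis Esg : @swap F i j = embed sg.

Lemma Hgrp_char (a : 'M[F]_3) : @Hgrp F i j a <-> exists hz, In hz (Hlist sg) /\ a = embed hz.
Proof.
  have Hss : mm sg sg = IZ by apply: (Hself sg sg Hsg); rewrite /Hlist /=; tauto.
  have HNN : mm NZ NZ = IZ by [].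
  split.
  - elim.
    + exists IZ; split; [rewrite /Hlist /=; tauto | by rewrite embed1].
    + move=> s g Hs _ [hz [Hh ->]].
      case: Hs => ->; rewrite ?Esg ?minus1E -embedM.
      * exists (mm sg hz); split => //. exact: (proj1 (Hclosed sg hz Hsg Hh)).
      * exists (mm NZ hz); split => //. exact: (proj2 (Hclosed sg hz Hsg Hh)).
    + move=> s g Hs _ [hz [Hh ->]].
      case: Hs => ->; rewrite ?Esg ?minus1E.
      * rewrite (@invmx_embed sg sg) // -embedM.
        exists (mm sg hz); split => //. exact: (proj1 (Hclosed sg hz Hsg Hh)).
      * rewrite (@invmx_embed NZ NZ) // -embedM.
        exists (mm NZ hz); split => //. exact: (proj2 (Hclosed sg hz Hsg Hh)).
  - move=> [hz [Hh ->]]. move: Hh; rewrite /Hlist /= => Hh.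
    case: Hh => [<-|[<-|[<-|[<-|[]]]]].
    + rewrite embed1; constructor.
    + rewrite -Esg -[swap _ _ _]mulmx1. apply: genM; [by left | constructor].
    + rewrite -minus1E -[minus1 _]mulmx1. apply: genM; [by right | constructor].
    + rewrite embedM -Esg -minus1E -[swap _ _ _]mulmx1.
      apply: genM; [by right|]. apply: genM; [by left | constructor].
Qed.

Lemma IsomZ_dec (a : 'M[F]_3) : IsomZ a ->
  exists hz g, In hz (Hlist sg) /\ genZ g /\ a = embed (mm hz g).
Proof.
  move=> /IsomZ_embed [m [-> Hm]].
  case: (decompZ sg m Hsg Hm) => hz [g [Hh [Hg E]]]. exists hz, g. by rewrite -E.
Qed.

Lemma iso_hg hz g : In hz (Hlist sg) -> genZ g -> IsomZ (embed (mm hz g)).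
Proof.
  move=> Hh Hg. case: (genZ_inv g Hg) => g' [Hg' E].
  apply: (@isomZ_embed (mm hz g) (mm g' hz)).
  - apply: isoM; [exact: (Hiso sg hz Hsg Hh) | exact: genZ_iso].
  - by rewrite -mmA (mmA g g') E mm1l (Hself sg hz Hsg Hh).
Qed.

Lemma sd_main : semidirect_eq (@IsomZ F) (@Hgrp F i j) (@Ggrp F).
Proof.
  have K1 : forall a : 'M[F]_3, IsomZ a <-> exists h n, [/\ @Hgrp F i j h, @Ggrp F n & a = h *m n].
    move=> a; split.
    - move=> /IsomZ_dec [hz [g [Hh [Hg ->]]]].
      exists (embed hz), (embed g); split.
      + apply/Hgrp_char; by exists hz.
      + apply/Ggrp_char; by exists g.
      + by rewrite embedM.
    - move=> [h [n [/Hgrp_char [hz [Hh ->]] /Ggrp_char [g [Hg ->]] ->]]].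
      rewrite -embedM. exact: iso_hg.
  split.
  - exact: K1.
  - move=> a Ha; apply/K1; exists a, 1%:M; split => //; [constructor | by rewrite mulmx1].
  - move=> a Ha; apply/K1; exists 1%:M, a; split => //; [constructor | by rewrite mul1mx].
  - move=> k n /IsomZ_dec [hz [g1 [Hh [Hg1 ->]]]] /Ggrp_char [g [Hg ->]].
    case: (genZ_inv g1 Hg1) => g1' [Hg1' E1].
    rewrite (@invmx_embed (mm hz g1) (mm g1' hz)); last first.
      by rewrite -mmA (mmA g1 g1') E1 mm1l (Hself sg hz Hsg Hh).
    rewrite -!embedM. apply/Ggrp_char. eexists; split; last reflexivity.
    have -> : mm (mm (mm g1' hz) g) (mm hz g1) = mm g1' (mm (mm hz (mm g hz)) g1).
      by rewrite !mmA.
    apply: genZ_mul => //. apply: genZ_mul => //. exact: (conjH sg hz g Hsg Hh).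
  - move=> a /Hgrp_char [hz [Hh ->]] /Ggrp_char [g [Hg E]].
    have Eg := embed_inj _ _ E. subst g.
    by rewrite (Hmeet sg hz Hsg Hh Hg) embed1.
Qed.

Lemma klein_main : klein_four (@Hgrp F i j).
Proof.
  have Hss : mm sg sg = IZ by apply: (Hself sg sg Hsg); rewrite /Hlist /=; tauto.
  exists (embed sg), (embed NZ); split.
  - move=> c. rewrite Hgrp_char. split.
    + move=> [hz [Hh ->]]. move: Hh; rewrite /Hlist /=.
      case=> [<-|[<-|[<-|[<-|[]]]]].
      * by constructor 1; rewrite embed1.
      * by constructor 2.
      * by constructor 3.
      * constructor 4. by rewrite -embedM -NZcomm.
    + case=> ->.
      * exists IZ; split; [rewrite /Hlist /=; tauto | by rewrite embed1].
      * exists sg; split => //; rewrite /Hlist /=; tauto.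
      * exists NZ; split => //; rewrite /Hlist /=; tauto.
      * exists (mm NZ sg); split; [rewrite /Hlist /=; tauto | by rewrite -embedM NZcomm].
  - by rewrite -embedM Hss embed1.
  - by rewrite -embedM embed1.
  - by rewrite -!embedM NZcomm.
  - rewrite -embed1 -embedM /=.
    have ne : forall a b, a <> b -> (embed a == embed b) = false.
      by move=> a b H; apply/eqP => /embed_inj.
    rewrite !inE !ne //; move: Hsg; rewrite /swaps /=;
      case=> [<-|[<-|[<-|[]]]]; vm_compute; discriminate.
Qed.

End Pair.

End FPart.

Theorem theorem5p4 (F : fieldType) (charF0 : [pchar F] =i pred0) :
  [/\ semidirect_eq (@IsomZ F) (@Hgrp F i0 i1) (@Ggrp F),
      semidirect_eq (@IsomZ F) (@Hgrp F i1 i2) (@Ggrp F),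
      semidirect_eq (@IsomZ F) (@Hgrp F i2 i0) (@Ggrp F) &
      [/\ klein_four (@Hgrp F i0 i1), klein_four (@Hgrp F i1 i2)
        & klein_four (@Hgrp F i2 i0)]].
Proof.
  have H01 : In S01 swaps by rewrite /swaps /=; tauto.
  have H12 : In S12 swaps by rewrite /swaps /=; tauto.
  have H20 : In S20 swaps by rewrite /swaps /=; tauto.
  split.
  - exact: (@sd_main F charF0 i0 i1 S01 H01 (@swap01 F)).
  - exact: (@sd_main F charF0 i1 i2 S12 H12 (@swap12 F)).
  - exact: (@sd_main F charF0 i2 i0 S20 H20 (@swap20 F)).
  - split.
    + exact: (@klein_main F charF0 i0 i1 S01 H01 (@swap01 F)).
    + exact: (@klein_main F charF0 i1 i2 S12 H12 (@swap12 F)).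
    + exact: (@klein_main F charF0 i2 i0 S20 H20 (@swap20 F)).
Qed.
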